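(* Let $q\ge 2$ and let $A_1$ be the distance-1 adjacency matrix of the Hamming scheme $H(3,q)$. Then there exist constants $\alpha,\beta$ with $A_1^3=\beta A_1+\alpha(J-A_1)$ if and only if $q=3$. Moreover, for $q=3$, with $A_i$ the distance-$i$ adjacency matrices of $H(3,3)$, $$A_1^3=15A_1+6(J-A_1),\quad A_2^3=69A_2+60(J-A_2),\quad (A_3+I)^3=33(A_3+I)+24(J-A_3-I),$$ so each of $A_1$, $A_2$, $A_3+I$ is the incidence matrix of a symmetric partial geometric design.
   Context: The Hamming scheme $H(d,q)$ has vertex set $S^d$ for a $q$-element set $S$, with $(\mathbf x,\mathbf y)\in R_i$ iff the Hamming distance $\delta(\mathbf x,\mathbf y)=|\{j: x_j\neq y_j\}|$ equals $i$; $A_i$ is the adjacency matrix of $R_i$, $J$ the all-ones matrix. A symmetric partial geometric design with parameters $(v,k;\alpha,\beta)$ is a design with $v$ points, $v$ blocks, block size and replication $k$, whose incidence matrix $N$ satisfies $NN^TN=\beta N+\alpha(J-N)$. *)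

(* Defs.v *)
From HB Require Import structures.
From mathcomp Require Import all_boot all_order all_algebra.
Set Implicit Arguments. Unset Strict Implicit. Unset Printing Implicit Defensive.
Import Order.TTheory GRing.Theory Num.Theory.
Local Open Scope ring_scope.

Definition hvert (d q : nat) : finType := {ffun 'I_d -> 'I_q}.

Definition hdist (d q : nat) (x y : hvert d q) : nat := #|[set j | x j != y j]|.

Definition hamA (d q i : nat) : 'M[rat]_#|hvert d q| :=
  \matrix_(a, b) ((hdist (enum_val a) (enum_val b) == i)%:R).

Definition Jmx (n : nat) : 'M[rat]_n := const_mx 1.

Definition sym_pgd (n : nat) (N : 'M[rat]_n) (k : nat) (alpha beta : rat) : Prop :=
  [/\ forall i j, N i j = 0 \/ N i j = 1,
      forall i, \sum_j N i j = k%:R,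
      forall j, \sum_i N i j = k%:R &
      N *m N^T *m N = beta *: N + alpha *: (Jmx n - N)].

(* Main.v *)
Require Import Defs.
From HB Require Import structures.
From mathcomp Require Import all_boot all_order all_algebra.
From mathcomp Require Import ring.
Import GRing.Theory.
Local Open Scope ring_scope.

Definition I (b : bool) : rat := (b : nat)%:R.

Lemma sum_enumv d q (G : hvert d q -> rat) :
  \sum_(k < #|hvert d q|) G (enum_val k) = \sum_(x : hvert d q) G x.
Proof.
rewrite (reindex (@enum_rank (hvert d q))); last first.
  by apply: onW_bij; apply: enum_rank_bij.
by apply: eq_bigr => x _; rewrite enum_rankK.
Qed.

Lemma hamAE d q i a b : hamA d q i a b = I (hdist (enum_val a) (enum_val b) == i).
Proof. by rewrite /hamA mxE. Qed.

Lemma cube_entry d q (f : hvert d q -> hvert d q -> rat) (M : 'M[rat]_#|hvert d q|) :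
  (forall a b, M a b = f (enum_val a) (enum_val b)) ->
  forall a b, (M *m M *m M) a b =
   \sum_(z : hvert d q) (\sum_(c : hvert d q) f (enum_val a) c * f c z) * f z (enum_val b).
Proof.
move=> HM a b; rewrite mxE -sum_enumv; apply: eq_bigr => l _.
rewrite mxE HM -sum_enumv; congr (_ * _); apply: eq_bigr => k _.
by rewrite !HM.
Qed.

Definition o0 : 'I_3 := @Ordinal 3 0 isT.
Definition o1 : 'I_3 := @Ordinal 3 1 isT.
Definition o2 : 'I_3 := @Ordinal 3 2 isT.
Definition T3 := (nat * nat * nat)%type.
Definition toT (x : hvert 3 3) : T3 := (nat_of_ord (x o0), nat_of_ord (x o1), nat_of_ord (x o2)).
Definition nd (t u : T3) : nat := ((t.1.1 != u.1.1) + (t.1.2 != u.1.2) + (t.2 != u.2))%N.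

Lemma hdist_card d q (x y : hvert d q) : hdist x y = (\sum_(j < d) (x j != y j))%N.
Proof. by rewrite /hdist -sum1_card big_mkcond /=; apply: eq_bigr => j _; rewrite inE; case: (_ != _). Qed.

Lemma hdist_toT x y : hdist x y = nd (toT x) (toT y).
Proof.
rewrite hdist_card !big_ord_recl big_ord0 addn0 /nd /= addnA.
have -> : (ord0 : 'I_3) = o0 by apply: val_inj.
have -> : lift o0 ord0 = o1 by apply: val_inj.
by have -> : lift o0 (lift ord0 ord0) = o2 by apply: val_inj.
Qed.

Definition L3 : seq T3 := [:: (0,0,0); (0,0,1); (0,0,2); (0,1,0); (0,1,1); (0,1,2); (0,2,0); (0,2,1); (0,2,2); (1,0,0); (1,0,1); (1,0,2); (1,1,0); (1,1,1); (1,1,2); (1,2,0); (1,2,1); (1,2,2); (2,0,0); (2,0,1); (2,0,2); (2,1,0); (2,1,1); (2,1,2); (2,2,0); (2,2,1); (2,2,2)].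

Lemma toT_inj : injective toT.
Proof.
move=> x y [E0 E1 E2]; apply/ffunP => j.
have Hj : j \in [:: o0; o1; o2] by case: j => [[|[|[|]]] Hj].
rewrite !inE in Hj; case/or3P: Hj => /eqP -> ; apply: val_inj => //.
Qed.

Lemma toT_L3 x : toT x \in L3.
Proof.
rewrite /toT; case: (x o0) (x o1) (x o2) => [[|[|[|a]]] Ha] [[|[|[|b]]] Hb] [[|[|[|c]]] Hc] //.
Qed.

Lemma sum_toT (G : T3 -> nat) : (\sum_(x : hvert 3 3) G (toT x))%N = sumn (map G L3).
Proof.
rewrite sumnE big_map.
have -> : (\sum_(x : hvert 3 3) G (toT x))%N = (\sum_(t <- map toT (enum (hvert 3 3))) G t)%N.
  by rewrite big_map big_enum.
apply: perm_big; apply: uniq_perm.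
- by rewrite map_inj_uniq ?enum_uniq //; apply: toT_inj.
- by [].
apply: (uniq_min_size (s1 := map toT (enum (hvert 3 3))) (s2 := L3) _ _ _).2.
- by rewrite map_inj_uniq ?enum_uniq //; apply: toT_inj.
- by move=> t /mapP [x _ ->]; apply: toT_L3.
by rewrite size_map -cardE card_ffun !card_ord.
Qed.

Definition ev3 (a : 'I_#|hvert 3 3|) : T3 := toT (enum_val a).

Definition cube_ok (g : T3 -> T3 -> bool) (r : T3 -> T3 -> nat) : bool :=
  all (fun t => all (fun u =>
    sumn (map (fun z => sumn (map (fun c => g t c * g c z) L3) * g z u) L3) == r t u)%N L3) L3.

Lemma cube_refl (g : T3 -> T3 -> bool) (r : T3 -> T3 -> nat) (M : 'M[rat]_#|hvert 3 3|) :
  (forall a b, M a b = I (g (ev3 a) (ev3 b))) -> cube_ok g r ->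
  forall a b, (M *m M *m M) a b = (r (ev3 a) (ev3 b))%:R.
Proof.
move=> HM ok a b.
rewrite (@cube_entry 3 3 (fun x y => I (g (toT x) (toT y)))) //.
have -> : (\sum_(z : hvert 3 3) (\sum_(c : hvert 3 3) I (g (ev3 a) (toT c)) * I (g (toT c) (toT z))) * I (g (toT z) (ev3 b)))
   = (\sum_(z : hvert 3 3) (\sum_(c : hvert 3 3) (g (ev3 a) (toT c) * g (toT c) (toT z))) * g (toT z) (ev3 b))%N%:R.
  rewrite natr_sum; apply: eq_bigr => z _; rewrite natrM natr_sum; congr (_ * _).
  by apply: eq_bigr => c _; rewrite natrM.
rewrite (eq_bigr (fun z => sumn (map (fun c => g (ev3 a) c * g c (toT z)) L3) * g (toT z) (ev3 b))%N); last first.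
  by move=> z _; rewrite -sum_toT.
rewrite (sum_toT (fun z => sumn (map (fun c => g (ev3 a) c * g c z) L3) * g z (ev3 b))%N).
move: ok => /allP /(_ _ (toT_L3 (enum_val a))) /allP /(_ _ (toT_L3 (enum_val b))) /eqP.
by rewrite /ev3 => ->.
Qed.

Definition g1 (t u : T3) := (nd t u == 1)%N.
Definition g2 (t u : T3) := (nd t u == 2)%N.
Definition g3 (t u : T3) := ((nd t u == 3) || (nd t u == 0))%N.

Lemma nd_sym t u : nd t u = nd u t.
Proof. by case: t u => [[a b] c] [[a' b'] c']; rewrite /nd /= ![_ == a]eq_sym ![_ == b]eq_sym ![_ == c]eq_sym. Qed.

Lemma nd0 t u : (nd t u == 0)%N = (t == u).
Proof.
case: t u => [[a b] c] [[a' b'] c']; rewrite /nd /= !xpair_eqE !addn_eq0 !eqb0 !negbK.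
by [].
Qed.

Lemma hamA3E i a b : hamA 3 3 i a b = I (nd (ev3 a) (ev3 b) == i)%N.
Proof. by rewrite hamAE hdist_toT. Qed.

Lemma A3IE a b : (hamA 3 3 3 + 1%:M) a b = I (g3 (ev3 a) (ev3 b)).
Proof.
rewrite !mxE hdist_toT -/(ev3 a) -/(ev3 b) /g3.
have -> : (a == b) = (nd (ev3 a) (ev3 b) == 0)%N.
  by rewrite nd0 /ev3 (inj_eq toT_inj) (inj_eq enum_val_inj).
by case: (nd _ _) => [|[|[|[|n]]]]; rewrite /I /= ?addr0 ?add0r.
Qed.

Lemma rhsE (M : 'M[rat]_#|hvert 3 3|) g (al be : nat) a b :
  (forall a b, M a b = I (g (ev3 a) (ev3 b))) ->
  (be%:R *: M + al%:R *: (Jmx _ - M)) a b = (if g (ev3 a) (ev3 b) then be else al)%:R.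
Proof.
move=> HM; rewrite !mxE HM /I; case: (g _ _) => /=.
  by rewrite mulr1 subrr mulr0 addr0.
by rewrite mulr0 subr0 mulr1 add0r.
Qed.

Lemma cube_id (M : 'M[rat]_#|hvert 3 3|) g (al be : nat) :
  (forall a b, M a b = I (g (ev3 a) (ev3 b))) ->
  cube_ok g (fun t u => if g t u then be else al) ->
  M *m M *m M = be%:R *: M + al%:R *: (Jmx _ - M).
Proof.
move=> HM ok; apply/matrixP => a b.
by rewrite (cube_refl _ _ _ HM ok) (rhsE _ _ _ _ _ _ HM).
Qed.

Definition row_ok (g : T3 -> T3 -> bool) (k : nat) :=
  all (fun t => sumn (map (fun u => nat_of_bool (g t u)) L3) == k)%N L3 && all (fun u => sumn (map (fun t => nat_of_bool (g t u)) L3) == k)%N L3.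

Lemma pgd_of (M : 'M[rat]_#|hvert 3 3|) g (k al be : nat) :
  (forall a b, M a b = I (g (ev3 a) (ev3 b))) ->
  (forall t u, g t u = g u t) ->
  cube_ok g (fun t u => if g t u then be else al) -> row_ok g k ->
  sym_pgd M k al%:R be%:R.
Proof.
move=> HM gs ok /andP [/allP rok /allP cok].
have MT : M^T = M by apply/matrixP => a b; rewrite mxE !HM gs.
split.
- by move=> i j; rewrite HM /I; case: (g _ _); [right|left].
- move=> i; rewrite (eq_bigr (fun j => I (g (ev3 i) (toT (enum_val j))))); last by move=> j _; rewrite HM.
  rewrite (@sum_enumv 3 3 (fun x => I (g (ev3 i) (toT x)))) /I -natr_sum.
  by rewrite (sum_toT (fun x => (g (ev3 i) x : nat))) (eqP (rok _ (toT_L3 _))).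
- move=> j; rewrite (eq_bigr (fun i => I (g (toT (enum_val i)) (ev3 j)))); last by move=> i _; rewrite HM.
  rewrite (@sum_enumv 3 3 (fun x => I (g (toT x) (ev3 j)))) /I -natr_sum.
  by rewrite (sum_toT (fun x => (g x (ev3 j) : nat))) (eqP (cok _ (toT_L3 _))).
by rewrite MT (cube_id _ _ _ _ HM ok).
Qed.

Lemma ok1 : cube_ok g1 (fun t u => if g1 t u then 15 else 6)%N. Proof. by vm_compute. Qed.
Lemma ok2 : cube_ok g2 (fun t u => if g2 t u then 69 else 60)%N. Proof. by vm_compute. Qed.
Lemma ok3 : cube_ok g3 (fun t u => if g3 t u then 33 else 24)%N. Proof. by vm_compute. Qed.
Lemma rok1 : row_ok g1 6. Proof. by vm_compute. Qed.
Lemma rok2 : row_ok g2 12. Proof. by vm_compute. Qed.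
Lemma rok3 : row_ok g3 9. Proof. by vm_compute. Qed.

Lemma H1 a b : hamA 3 3 1 a b = I (g1 (ev3 a) (ev3 b)). Proof. exact: hamA3E. Qed.
Lemma H2 a b : hamA 3 3 2 a b = I (g2 (ev3 a) (ev3 b)). Proof. exact: hamA3E. Qed.
Lemma g1s t u : g1 t u = g1 u t. Proof. by rewrite /g1 nd_sym. Qed.
Lemma g2s t u : g2 t u = g2 u t. Proof. by rewrite /g2 nd_sym. Qed.
Lemma g3s t u : g3 t u = g3 u t. Proof. by rewrite /g3 nd_sym. Qed.

Lemma part_q3 :
  [/\ hamA 3 3 1 *m hamA 3 3 1 *m hamA 3 3 1
        = 15%:R *: hamA 3 3 1 + 6%:R *: (Jmx _ - hamA 3 3 1),
      hamA 3 3 2 *m hamA 3 3 2 *m hamA 3 3 2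
        = 69%:R *: hamA 3 3 2 + 60%:R *: (Jmx _ - hamA 3 3 2) &
      (hamA 3 3 3 + 1%:M) *m (hamA 3 3 3 + 1%:M) *m (hamA 3 3 3 + 1%:M)
        = 33%:R *: (hamA 3 3 3 + 1%:M)
          + 24%:R *: (Jmx _ - hamA 3 3 3 - 1%:M)] /\
  [/\ sym_pgd (hamA 3 3 1) 6 6%:R 15%:R,
      sym_pgd (hamA 3 3 2) 12 60%:R 69%:R &
      sym_pgd (hamA 3 3 3 + 1%:M) 9 24%:R 33%:R].
Proof.
split; split.
- exact: (cube_id _ _ _ _ H1 ok1).
- exact: (cube_id _ _ _ _ H2 ok2).
- by rewrite -addrA -opprD; exact: (cube_id _ _ _ _ A3IE ok3).
- exact: (pgd_of _ _ _ _ _ H1 g1s ok1 rok1).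
- exact: (pgd_of _ _ _ _ _ H2 g2s ok2 rok2).
- exact: (pgd_of _ _ _ _ _ A3IE g3s ok3 rok3).
Qed.

Lemma Ieq (b e : bool) : I (b == e) = if e then I b else 1 - I b.
Proof. by case: b; case: e; rewrite /I /= ?subrr ?subr0. Qed.

Lemma sum_pt (q : nat) (z : 'I_q) (F : 'I_q -> rat) : \sum_(u < q) I (u == z) * F u = F z.
Proof.
rewrite (bigD1 z) //= eqxx /I mul1r big1 ?addr0 // => u /negbTE ->; by rewrite mul0r.
Qed.

Lemma sumG (q : nat) (a z : 'I_q) (e : bool) (G : bool -> rat) :
  \sum_(u < q) I ((a == u) == e) * G (u == z)
  = if e then G (a == z) else G true + (q%:R - 1) * G false - G (a == z).
Proof.
have S : \sum_(u < q) G (u == z) = G true + (q%:R - 1) * G false.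
  rewrite (bigD1 z) //= eqxx; congr (_ + _).
  rewrite (eq_bigr (fun _ => G false)); last by move=> u /negbTE ->.
  rewrite sumr_const cardC1 card_ord.
  have q0 : (0 < q)%N by apply: leq_ltn_trans (ltn_ord z).
  by rewrite -subn1 -[G false *+ _]mulr_natl natrB // mulrC.
case: e.
  under eq_bigr => u _ do rewrite eqb_id eq_sym.
  by rewrite sum_pt.
under eq_bigr => u _ do rewrite Ieq eq_sym mulrBl mul1r.
by rewrite sumrB sum_pt S.
Qed.

Lemma prodI n (F : 'I_n -> bool) : \prod_(k < n) I (F k) = I [forall k, F k].
Proof.
case: (boolP [forall k, F k]) => [/forallP H | H].
  by rewrite big1 // => k _; rewrite H.
move: H => /forallPn [k Hk]; rewrite (bigD1 k) //= (negbTE Hk) /I /= mul0r.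
by [].
Qed.

Lemma A1_prod d q (x c : hvert d q) :
  I (hdist x c == 1)%N = \sum_(j < d) \prod_(k < d) I ((x k == c k) == (j != k)).
Proof.
set D := [set k | x k != c k].
have E : forall j, [forall k, (x k == c k) == (j != k)] = (D == [set j]).
  move=> j; apply/forallP/eqP => [H | H].
    apply/setP => k; rewrite !inE; move/eqP: (H k) => ->; by rewrite negbK eq_sym.
  move=> k; move/setP: H => /(_ k); rewrite !inE => Hk.
  by apply/eqP; rewrite -(negbK (x k == c k)) Hk eq_sym.
under eq_bigr => j _ do rewrite prodI E.
rewrite /hdist -/D; case: (@cards1P _ D) => [[j0 ->] | H].
  rewrite (bigD1 j0) //= eqxx big1 ?addr0 // => j Hj.
  by rewrite (inj_eq (@set1_inj _)) eq_sym (negbTE Hj).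
rewrite big1 // => j _; case: eqP => // HD; by case: H; exists j.
Qed.

Lemma expand3 (T : finType) n (a : 'I_n -> T -> rat) (b : 'I_n -> T -> T -> rat) (c : 'I_n -> T -> rat) :
  \sum_(z : T) (\sum_(x : T) (\sum_(j < n) a j x) * (\sum_(j < n) b j x z)) * (\sum_(j < n) c j z)
  = \sum_(j1 < n) \sum_(j2 < n) \sum_(j3 < n) \sum_(z : T) \sum_(x : T) a j1 x * b j2 x z * c j3 z.
Proof.
transitivity (\sum_(z : T) \sum_(x : T) \sum_(j1 < n) \sum_(j2 < n) \sum_(j3 < n) a j1 x * b j2 x z * c j3 z).
  apply: eq_bigr => z _; rewrite mulr_suml; apply: eq_bigr => x _.
  rewrite big_distrlr /= mulr_suml; apply: eq_bigr => j1 _.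
  rewrite mulr_suml; apply: eq_bigr => j2 _.
  by rewrite mulr_sumr.
under eq_bigr => z _ do rewrite exchange_big.
rewrite exchange_big; apply: eq_bigr => j1 _.
under eq_bigr => z _ do rewrite exchange_big.
rewrite exchange_big; apply: eq_bigr => j2 _.
under eq_bigr => z _ do rewrite exchange_big.
by rewrite exchange_big.
Qed.

Lemma sum_prod_ffun d q (G : 'I_d -> 'I_q -> rat) :
  \sum_(x : hvert d q) \prod_(k < d) G k (x k) = \prod_(k < d) \sum_(u < q) G k u.
Proof. by rewrite bigA_distr_bigA. Qed.

Lemma Wfact d q (x y : hvert d q) :
  \sum_(z : hvert d q) (\sum_(c : hvert d q) I (hdist x c == 1)%N * I (hdist c z == 1)%N) * I (hdist z y == 1)%N
  = \sum_(j1 < d) \sum_(j2 < d) \sum_(j3 < d) \prod_(k < d)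
      \sum_(u < q) (I ((x k == u) == (j1 != k)) *
        \sum_(v < q) (I ((u == v) == (j2 != k)) * I ((v == y k) == (j3 != k)))).
Proof.
under eq_bigr => z _ do (under eq_bigr => c _ do rewrite !A1_prod; rewrite A1_prod).
rewrite expand3; apply: eq_bigr => j1 _; apply: eq_bigr => j2 _; apply: eq_bigr => j3 _.
under eq_bigr => z _ do (under eq_bigr => c _ do rewrite -!big_split /=).
transitivity (\sum_(z : hvert d q) \prod_(k < d) \sum_(u < q)
   (I ((x k == u) == (j1 != k)) * I ((u == z k) == (j2 != k)) * I ((z k == y k) == (j3 != k)))).
  apply: eq_bigr => z _.
  by rewrite (@sum_prod_ffun d q (fun k u => I ((x k == u) == (j1 != k)) * I ((u == z k) == (j2 != k)) * I ((z k == y k) == (j3 != k)))).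
rewrite (@sum_prod_ffun d q (fun k v => \sum_(u < q) I ((x k == u) == (j1 != k)) * I ((u == v) == (j2 != k)) * I ((v == y k) == (j3 != k)))).
apply: eq_bigr => k _; rewrite exchange_big; apply: eq_bigr => u _.
by rewrite mulr_sumr; apply: eq_bigr => v _; rewrite mulrA.
Qed.

Definition psi (Q : rat) (e2 e3 w : bool) : rat :=
  if e2 then I (w == e3) else I (true == e3) + (Q - 1) * I (false == e3) - I (w == e3).
Definition Phi (Q : rat) (e1 e2 e3 w : bool) : rat :=
  if e1 then psi Q e2 e3 w else psi Q e2 e3 true + (Q - 1) * psi Q e2 e3 false - psi Q e2 e3 w.

Lemma coordPhi q (a b : 'I_q) e1 e2 e3 :
  \sum_(u < q) (I ((a == u) == e1) * \sum_(v < q) (I ((u == v) == e2) * I ((v == b) == e3)))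
  = Phi q%:R e1 e2 e3 (a == b).
Proof.
transitivity (\sum_(u < q) I ((a == u) == e1) * psi q%:R e2 e3 (u == b)).
  by apply: eq_bigr => u _; rewrite (@sumG q u b e2 (fun w => I (w == e3))).
by rewrite (@sumG q a b e1 (psi q%:R e2 e3)).
Qed.

Lemma evalW (Q : rat) (w : bool) :
  \sum_(j1 < 3) \sum_(j2 < 3) \sum_(j3 < 3) \prod_(k < 3) Phi Q (j1 != k) (j2 != k) (j3 != k) w
  = if w then 3 * (Q - 1) * (Q - 2) else 6.
Proof.
rewrite !big_ord_recl !big_ord0 /=.
rewrite /Phi /psi /I /=.
case: w => /=; ring.
Qed.

Lemma Wconst q (x y : hvert 3 q) (w : bool) : (forall k, (x k == y k) = w) ->
  \sum_(z : hvert 3 q) (\sum_(c : hvert 3 q) I (hdist x c == 1)%N * I (hdist c z == 1)%N) * I (hdist z y == 1)%N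
  = if w then 3 * (q%:R - 1) * (q%:R - 2) else 6.
Proof.
move=> Hw; rewrite Wfact -(evalW q%:R w).
apply: eq_bigr => j1 _; apply: eq_bigr => j2 _; apply: eq_bigr => j3 _; apply: eq_bigr => k _.
by rewrite coordPhi Hw.
Qed.

Lemma fwd q : (2 <= q)%N ->
  (exists alpha beta : rat,
         hamA 3 q 1 *m hamA 3 q 1 *m hamA 3 q 1
         = beta *: hamA 3 q 1 + alpha *: (Jmx _ - hamA 3 q 1)) -> q = 3%N.
Proof.
move=> q2 [al [be H]].
have q0 : (0 < q)%N by apply: leq_trans q2.
pose x0 : hvert 3 q := [ffun _ => Ordinal q0].
pose y0 : hvert 3 q := [ffun _ => Ordinal q2].
have HM := fun a b => hamAE 3 q 1 a b.
have C := @cube_entry 3 q (fun x y => I (hdist x y == 1)%N) (hamA 3 q 1) HM.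
have E := fun a b => congr1 (fun M : 'M_ _ => M a b) H.
have Ea := E (enum_rank x0) (enum_rank x0).
have Eb := E (enum_rank x0) (enum_rank y0).
rewrite /= C !mxE !enum_rankK in Ea.
rewrite /= C !mxE !enum_rankK in Eb.
have d00 : hdist x0 x0 = 0%N by rewrite hdist_card big1 // => j _; rewrite eqxx.
have d01 : hdist x0 y0 = 3%N by rewrite hdist_card !big_ord_recl big_ord0 /= !ffunE.
rewrite (@Wconst q x0 x0 true) in Ea; last by move=> k; rewrite eqxx.
rewrite (@Wconst q x0 y0 false) in Eb; last by move=> k; rewrite !ffunE.
rewrite d00 /I /= mulr0 add0r subr0 mulr1 in Ea.
rewrite d01 /I /= mulr0 add0r subr0 mulr1 in Eb.
rewrite /= -Eb in Ea.
have : (q%:R : rat) * (q%:R - 3) = 0.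
  have -> : (q%:R : rat) * (q%:R - 3) = (3 * (q%:R - 1) * (q%:R - 2) - 6) / 3 by field.
  by rewrite Ea subrr mul0r.
move/eqP; rewrite mulf_eq0 => /orP [| ]; first by rewrite Num.Theory.pnatr_eq0 => /eqP q00; clear x0 y0 C E HM Ea Eb d00 d01 H; move: q2; rewrite q00.
by rewrite subr_eq0 => /eqP /(congr1 (fun r : rat => r)) ; move/eqP; rewrite (Num.Theory.eqr_nat rat q 3) => /eqP.
Qed.

Theorem proposition6p1 :
  (forall q : nat, (2 <= q)%N ->
     ((exists alpha beta : rat,
         hamA 3 q 1 *m hamA 3 q 1 *m hamA 3 q 1
         = beta *: hamA 3 q 1 + alpha *: (Jmx _ - hamA 3 q 1))
      <-> q = 3%N)) /\
  [/\ hamA 3 3 1 *m hamA 3 3 1 *m hamA 3 3 1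
        = 15%:R *: hamA 3 3 1 + 6%:R *: (Jmx _ - hamA 3 3 1),
      hamA 3 3 2 *m hamA 3 3 2 *m hamA 3 3 2
        = 69%:R *: hamA 3 3 2 + 60%:R *: (Jmx _ - hamA 3 3 2) &
      (hamA 3 3 3 + 1%:M) *m (hamA 3 3 3 + 1%:M) *m (hamA 3 3 3 + 1%:M)
        = 33%:R *: (hamA 3 3 3 + 1%:M)
          + 24%:R *: (Jmx _ - hamA 3 3 3 - 1%:M)] /\
  [/\ sym_pgd (hamA 3 3 1) 6 6%:R 15%:R,
      sym_pgd (hamA 3 3 2) 12 60%:R 69%:R &
      sym_pgd (hamA 3 3 3 + 1%:M) 9 24%:R 33%:R].
Proof.
split; last exact: part_q3.
move=> q q2; split; first exact: fwd.
move=> ->; exists 6%:R, 15%:R; by case: part_q3 => [[H1' _ _] _].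
Qed.
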